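(* Let $\mathbf{A}\in\mathbb{R}^{m_1\times n}$ ($m_1\ge 1$), $\mathbf{b}\in\mathbb{R}^{m_1}$, $\mathbf{W}\in\mathbb{R}^{m_2\times n}$, $\mathbf{q}\in\mathbb{R}^{m_2}$, and let $\chi=\{\mathbf{x}\in\mathbb{R}^n:\mathbf{A}\mathbf{x}\ge\mathbf{b},\ \mathbf{W}\mathbf{x}\ge\mathbf{q}\}$ be nonempty, full-dimensional and free of redundant constraints. Let $\mathbf{x}^0\in\mathbb{R}^n$ be any point (feasible or not). Then the following optimization problem $\mathbf{SIO}(\mathbf{x}^0)$, in the variables $\mathbf{c},\epsilon\in\mathbb{R}^n$, $\mathbf{y}\in\mathbb{R}^{m_1}$, $\mathbf{u}\in\mathbb{R}^{m_2}$, $$\min\ \mathscr{D}(\epsilon,\mathbf{A})\ \text{ s.t. }\ \mathbf{A}(\mathbf{x}^0-\epsilon)\ge\mathbf{b},\ \mathbf{W}(\mathbf{x}^0-\epsilon)\ge\mathbf{q},\ \mathbf{c}'(\mathbf{x}^0-\epsilon)=\mathbf{b}'\mathbf{y},\ \mathbf{A}'\mathbf{y}=\mathbf{c},\ \|\mathbf{c}\|_L=1,\ \mathbf{y}\ge\mathbf{0},\ \mathbf{u}=\mathbf{0},$$ is feasible.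
   Context: The rows of $\mathbf{A}\mathbf{x}\ge\mathbf{b}$ are called relevant constraints and the rows of $\mathbf{W}\mathbf{x}\ge\mathbf{q}$ trivial constraints. $\|\cdot\|_L$ is a fixed norm on $\mathbb{R}^n$, and $\mathscr{D}\ge 0$ is a user-chosen nonnegative distance measure depending on the perturbation vector $\epsilon$ and the matrix $\mathbf{A}$. ''Free of redundant constraints'' means that for every constraint there is a point of $\chi$ at which that constraint holds with equality. *)

(* Defs.v *)
From HB Require Import structures.
From mathcomp Require Import all_boot all_order all_algebra.
From mathcomp Require Import reals.
Set Implicit Arguments. Unset Strict Implicit. Unset Printing Implicit Defensive.
Import Order.TTheory GRing.Theory Num.Theory.
Local Open Scope ring_scope.

Definition vge (R : realType) (k : nat) (u v : 'cV[R]_k) : Prop :=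
  forall i : 'I_k, v i 0 <= u i 0.

Definition in_chi (R : realType) (m1 m2 n : nat)
  (A : 'M[R]_(m1, n)) (b : 'cV[R]_m1) (W : 'M[R]_(m2, n)) (q : 'cV[R]_m2)
  (x : 'cV[R]_n) : Prop :=
  vge (A *m x) b /\ vge (W *m x) q.

Definition full_dimensional (R : realType) (m1 m2 n : nat)
  (A : 'M[R]_(m1, n)) (b : 'cV[R]_m1) (W : 'M[R]_(m2, n)) (q : 'cV[R]_m2) : Prop :=
  exists (x : 'cV[R]_n) (r : R), 0 < r /\
    forall z : 'cV[R]_n, (forall j : 'I_n, `|z j 0 - x j 0| < r) ->
      in_chi A b W q z.

(* Free of redundant constraints: every constraint is active (holds with
   equality) at some point of chi. *)
Definition no_redundant_constraints (R : realType) (m1 m2 n : nat)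
  (A : 'M[R]_(m1, n)) (b : 'cV[R]_m1) (W : 'M[R]_(m2, n)) (q : 'cV[R]_m2) : Prop :=
  (forall i : 'I_m1, exists x, in_chi A b W q x /\ (A *m x) i 0 = b i 0) /\
  (forall i : 'I_m2, exists x, in_chi A b W q x /\ (W *m x) i 0 = q i 0).

Definition is_norm (R : realType) (n : nat) (N : 'cV[R]_n -> R) : Prop :=
  (forall v, N v = 0 -> v = 0) /\
  (forall (a : R) v, N (a *: v) = `|a| * N v) /\
  (forall u v, N (u + v) <= N u + N v).

(* Feasible points of SIO(x0): (c, eps, y, u). The objective D plays no role
   in feasibility. *)
Definition SIO_feasible (R : realType) (m1 m2 n : nat)
  (A : 'M[R]_(m1, n)) (b : 'cV[R]_m1) (W : 'M[R]_(m2, n)) (q : 'cV[R]_m2)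
  (N : 'cV[R]_n -> R) (x0 : 'cV[R]_n)
  (c eps : 'cV[R]_n) (y : 'cV[R]_m1) (u : 'cV[R]_m2) : Prop :=
  vge (A *m (x0 - eps)) b /\
  vge (W *m (x0 - eps)) q /\
  c^T *m (x0 - eps) = b^T *m y /\
  A^T *m y = c /\
  N c = 1 /\
  vge y 0 /\
  u = 0.

(* Main.v *)
Require Import Defs.
From HB Require Import structures.
From mathcomp Require Import all_boot all_order all_algebra.
From mathcomp Require Import reals.
Import Order.TTheory GRing.Theory Num.Theory.
Local Open Scope ring_scope.

Theorem proposition1 (R : realType) (m1 m2 n : nat)
  (A : 'M[R]_(m1, n)) (b : 'cV[R]_m1) (W : 'M[R]_(m2, n)) (q : 'cV[R]_m2)
  (N : 'cV[R]_n -> R) (D : 'cV[R]_n -> 'M[R]_(m1, n) -> R)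
  (x0 : 'cV[R]_n) :
  (0 < m1)%N ->
  is_norm N ->
  (forall e M, 0 <= D e M) ->
  (exists x, in_chi A b W q x) ->
  full_dimensional A b W q ->
  no_redundant_constraints A b W q ->
  (forall i : 'I_m1, row i A != 0) ->
  exists (c eps : 'cV[R]_n) (y : 'cV[R]_m1) (u : 'cV[R]_m2),
    SIO_feasible A b W q N x0 c eps y u.
Proof.
move=> Hm [N0 [NZ NT]] _ _ _ [Hred _] Hrow.
pose i0 : 'I_m1 := Ordinal Hm.
have [x1 [[Hx1A Hx1W] Hact]] := Hred i0.
pose a : 'cV[R]_n := (row i0 A)^T.
have Nge0 : forall v, 0 <= N v.
  move=> v.
  have h0 : N 0 = 0 by rewrite -(scale0r v) NZ normr0 mul0r.
  have := NT v (-v); rewrite subrr h0.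
  have -> : N (- v) = N v by rewrite -scaleN1r NZ normrN normr1 mul1r.
  move=> h; have : 0 <= N v *+ 2 by rewrite mulr2n.
  by rewrite pmulrn_lge0.
have Na : 0 < N a.
  rewrite lt_def Nge0 andbT; apply/negP => /eqP/N0 /(congr1 trmx).
  rewrite trmxK trmx0 => /eqP; by rewrite (negbTE (Hrow i0)).
pose t := (N a)^-1.
have t0 : 0 < t by rewrite invr_gt0.
exists (t *: a), (x0 - x1), (t *: delta_mx i0 0), 0.
rewrite /SIO_feasible.
have -> : x0 - (x0 - x1) = x1 by rewrite opprB addrC subrK.
split; first exact: Hx1A.
split; first exact: Hx1W.
split.
  rewrite linearZ /= trmxK -scalemxAl -scalemxAr -row_mul -colE -tr_row.
  congr (_ *: _); apply/matrixP => i j; rewrite !ord1 !mxE.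
  by rewrite -Hact mxE.
split; first by rewrite -scalemxAr -colE -tr_row.
split; first by rewrite NZ gtr0_norm // mulVf // gt_eqF.
split=> // i; rewrite !mxE.
by rewrite mulr_ge0 // ltW.
Qed.
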